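(* Let $\Gamma(X,Y,E')$ be a connected bipartite graph with $m=|X|$, $n=|Y|$, and let $W=R_1R_0$ be the (extended) Szegedy walk operator on $\mathcal{H}^{m}\otimes\mathcal{H}^{n}$ defined from right-stochastic matrices $P=(p_{xy})$, $Q=(q_{yx})$ and real phases $\theta_{xy},\theta'_{xy}$ as described in the context. Let $\mathcal{H}_E\subset \mathcal{H}^{m}\otimes\mathcal{H}^{n}$ be the subspace spanned by $\{\ket{x}\otimes\ket{y}: \{x,y\}\in E'\}$. Then $W(\mathcal{H}_E)=\mathcal{H}_E$ and $W$ acts as the identity on $\mathcal{H}_E^{\perp}$; i.e., in a basis adapted to $\mathcal{H}_E\oplus\mathcal{H}_E^\perp$, $W=W|_{\mathcal{H}_E}\oplus I$.
   Context: Szegedy's QW: Let $\Gamma(X,Y,E')$ be a connected bipartite graph with biadjacency matrix $M$ ($M_{x,y}=1$ if $\{x,y\}\in E'$, else $0$). Let $P$ be an $m\times n$ right-stochastic matrix with entries $p_{xy}\ge 0$ such that $M_{x,y}=0\Rightarrow p_{xy}=0$, and $Q$ an $n\times m$ right-stochastic matrix with entries $q_{yx}\ge0$ such that $M_{x,y}=0\Rightarrow q_{yx}=0$. On $\mathcal{H}^{m}\otimes\mathcal{H}^{n}$ with computational basis $\{\ket{x,y}=\ket{x}\otimes\ket{y}: x\in X,y\in Y\}$ define, for real $\theta_{xy},\theta'_{xy}$, $\ket{\phi_x}=\sum_{y\in Y}\sqrt{p_{xy}}e^{i\theta_{xy}}\ket{x,y}$ and $\ket{\psi_y}=\sum_{x\in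 X}\sqrt{q_{yx}}e^{i\theta'_{xy}}\ket{x,y}$, and $R_0=2\sum_{x\in X}\ket{\phi_x}\bra{\phi_x}-I$, $R_1=2\sum_{y\in Y}\ket{\psi_y}\bra{\psi_y}-I$, $W=R_1R_0$. (Szegedy's original model has all phases zero; allowing nonzero phases gives the extended Szegedy QW.) *)

(* Defs.v *)
From HB Require Import structures.
From mathcomp Require Import all_boot all_order all_algebra.
From mathcomp Require Import complex mxtens.
From mathcomp Require Import reals trigo.
Set Implicit Arguments. Unset Strict Implicit. Unset Printing Implicit Defensive.
Import Order.TTheory GRing.Theory Num.Theory.
Local Open Scope ring_scope.
Local Open Scope complex_scope.

Definition expi (R : realType) (t : R) : R[i] := (cos t)%:C + 'i * (sin t)%:C.

Definition adj (R : realType) p q (A : 'M[R[i]]_(p, q)) : 'M[R[i]]_(q, p) :=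
  (map_mx Num.conj A)^T.

Definition ket (R : realType) m n (x : 'I_m) (y : 'I_n) : 'cV[R[i]]_(m * n) :=
  (delta_mx x ord0 : 'cV[R[i]]_m) *t (delta_mx y ord0 : 'cV[R[i]]_n).

(* bipartite graph Gamma(X,Y,E') with X = 'I_m, Y = 'I_n; E x y <=> {x,y} in E'
   (i.e. E is the biadjacency matrix M). Vertex set X + Y. *)
Definition bip_adj m n (E : 'I_m -> 'I_n -> bool) : rel ('I_m + 'I_n) :=
  fun a b => match a, b with
             | inl x, inr y => E x y
             | inr y, inl x => E x y
             | _, _ => false
             end.
Definition bip_connected m n (E : 'I_m -> 'I_n -> bool) : Prop :=
  forall a b : 'I_m + 'I_n, connect (bip_adj E) a b.

Definition phi_vec (R : realType) m n (P : 'M[R]_(m, n)) (th : 'I_m -> 'I_n -> R)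
  (x : 'I_m) : 'cV[R[i]]_(m * n) :=
  \sum_(y < n) (((Num.sqrt (P x y))%:C * expi (th x y)) *: ket R x y).

Definition psi_vec (R : realType) m n (Q : 'M[R]_(n, m)) (th' : 'I_m -> 'I_n -> R)
  (y : 'I_n) : 'cV[R[i]]_(m * n) :=
  \sum_(x < m) (((Num.sqrt (Q y x))%:C * expi (th' x y)) *: ket R x y).

Definition R0op (R : realType) m n (P : 'M[R]_(m, n)) th : 'M[R[i]]_(m * n) :=
  2%:R *: (\sum_(x < m) (phi_vec P th x *m adj (phi_vec P th x))) - 1%:M.

Definition R1op (R : realType) m n (Q : 'M[R]_(n, m)) th' : 'M[R[i]]_(m * n) :=
  2%:R *: (\sum_(y < n) (psi_vec Q th' y *m adj (psi_vec Q th' y))) - 1%:M.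

Definition Wop (R : realType) m n (P : 'M[R]_(m, n)) (Q : 'M[R]_(n, m)) th th'
  : 'M[R[i]]_(m * n) := R1op Q th' *m R0op P th.

(* H_E = span{ |x,y> : {x,y} in E' }, represented as a row space (of transposes) *)
Definition HE_mx (R : realType) m n (E : 'I_m -> 'I_n -> bool) : 'M[R[i]]_(m * n) :=
  (\sum_(x < m) \sum_(y < n | E x y) <<(ket R x y)^T>>)%MS.

Definition in_HE (R : realType) m n (E : 'I_m -> 'I_n -> bool) (v : 'cV[R[i]]_(m * n)) : bool :=
  ((v^T) <= HE_mx R E)%MS.

Definition in_HE_perp (R : realType) m n (E : 'I_m -> 'I_n -> bool) (v : 'cV[R[i]]_(m * n)) : Prop :=
  forall u : 'cV[R[i]]_(m * n), in_HE E u -> adj u *m v = 0.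

Definition right_stochastic (R : realType) p q (A : 'M[R]_(p, q)) : Prop :=
  (forall i j, 0 <= A i j) /\ (forall i, \sum_(j < q) A i j = 1).

(* Main.v *)
Require Import Defs.
From HB Require Import structures.
From mathcomp Require Import all_boot all_order all_algebra.
From mathcomp Require Import complex mxtens.
From mathcomp Require Import reals trigo.
Import Order.TTheory GRing.Theory Num.Theory.
Local Open Scope ring_scope.

Section Aux.
Variable R : realType.
Local Notation C := (R[i]).

Lemma sc (p t : R) : 0 <= p ->
  Num.conj ((Num.sqrt p)%:C%C * expi t) * ((Num.sqrt p)%:C%C * expi t) = (p%:C)%C.
Proof.
move=> p0; rewrite -normCKC /expi.
rewrite normc_def /=. simpc.
rewrite -rmorphXn sqr_sqrtr ?addr_ge0 ?sqr_ge0 // !exprMn sqr_sqrtr // -mulrDr cos2Dsin2 mulr1 //.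
Qed.

Lemma adjD p q (A B : 'M[C]_(p, q)) : adj (A + B) = adj A + adj B.
Proof. by apply/matrixP => i j; rewrite !mxE rmorphD. Qed.
Lemma adj0 p q : adj (0 : 'M[C]_(p, q)) = 0.
Proof. by apply/matrixP => i j; rewrite !mxE rmorph0. Qed.
Lemma adjZ p q a (A : 'M[C]_(p, q)) : adj (a *: A) = Num.conj a *: adj A.
Proof. by apply/matrixP => i j; rewrite !mxE rmorphM. Qed.
Lemma adj_sum p q k (F : 'I_k -> 'M[C]_(p, q)) :
  adj (\sum_i F i) = \sum_i adj (F i).
Proof. exact: (big_morph _ (@adjD p q) (@adj0 p q)). Qed.

Lemma adj_delta N (i : 'I_N) : adj (delta_mx i 0 : 'cV[C]_N) = delta_mx 0 i.
Proof. apply/matrixP => a b; rewrite !mxE.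
by rewrite rmorph_nat andbC. Qed.

Lemma ketE m n (x : 'I_m) (y : 'I_n) : ket R x y = delta_mx (mxtens_index (x, y)) 0.
Proof.
apply/matrixP => a b; rewrite /ket /tensmx !mxE !ord1.
case: a / (mxtens_indexP a) => i j; rewrite mxtens_indexK (can_eq (@mxtens_indexK _ _)) /=.
rewrite xpair_eqE.
by case: (i == x); case: (j == y); rewrite /= ?mulr1 ?mulr0 ?mul0r.
Qed.

Definition ket' m n (p : 'I_m * 'I_n) := ket R p.1 p.2.
Arguments ket' {m n}.

Lemma ket_inner m n (p q : 'I_m * 'I_n) : adj (ket' p) *m ket' q = ((p == q : bool) : nat)%:R%:M.
Proof.
case: p => x y; case: q => x' y'; rewrite /ket' /= !ketE adj_delta mul_delta_mx_cond.
rewrite (can_eq (@mxtens_indexK _ _)).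
apply/matrixP => a b; rewrite !mxE !ord1 /=.
by case: (_ == _); rewrite ?mulr0n ?mulr1n !mxE.
Qed.

Lemma adj_sum_ket m n k (a b : 'I_k -> C) (pa pb : 'I_k -> 'I_m * 'I_n) :
  adj (\sum_j a j *: ket' (pa j)) *m (\sum_j b j *: ket' (pb j)) =
  (\sum_j \sum_j' (Num.conj (a j) * b j' * ((pa j == pb j' : bool) : nat)%:R))%:M.
Proof.
rewrite adj_sum mulmx_suml raddf_sum; apply: eq_bigr => j _.
rewrite adjZ mulmx_sumr raddf_sum; apply: eq_bigr => j' _.
by rewrite -scalemxAl -scalemxAr ket_inner scalerA scale_scalar_mx.
Qed.

Section Refl.
Variables (m n k : nat) (E : 'I_m -> 'I_n -> bool) (f : 'I_k -> 'cV[C]_(m * n)).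

Definition Refl := 2%:R *: (\sum_i (f i *m adj (f i))) - 1%:M : 'M[C]_(m * n).

Lemma in_HE0 : in_HE E (0 : 'cV[C]_(m * n)).
Proof. by rewrite /in_HE trmx0 sub0mx. Qed.
Lemma in_HED (u v : 'cV[C]_(m * n)) : in_HE E u -> in_HE E v -> in_HE E (u + v).
Proof. by rewrite /in_HE linearD /=; apply: addmx_sub. Qed.
Lemma in_HEZ a (u : 'cV[C]_(m * n)) : in_HE E u -> in_HE E (a *: u).
Proof. by rewrite /in_HE linearZ /=; apply: scalemx_sub. Qed.
Lemma in_HEN (u : 'cV[C]_(m * n)) : in_HE E u -> in_HE E (- u).
Proof. by rewrite /in_HE linearN /= eqmx_opp. Qed.
Lemma in_HE_sum k' (F : 'I_k' -> 'cV[C]_(m * n)) :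
  (forall i, in_HE E (F i)) -> in_HE E (\sum_i F i).
Proof.
move=> H; elim/big_ind: _ => //; [exact: in_HE0| exact: in_HED].
Qed.

Hypothesis fo : forall i j, adj (f i) *m f j = ((i == j : bool) : nat)%:R%:M.
Hypothesis fE : forall i, in_HE E (f i).

Lemma Pi_idem : (\sum_i (f i *m adj (f i))) *m (\sum_i (f i *m adj (f i)))
   = \sum_i (f i *m adj (f i)).
Proof.
rewrite mulmx_suml; apply: eq_bigr => i _.
have H j : f i *m adj (f i) *m (f j *m adj (f j)) = ((i == j : bool) : nat)%:R *: (f i *m adj (f j)).
  by rewrite mulmxA -(mulmxA (f i)) fo mul_mx_scalar -scalemxAl.
rewrite mulmx_sumr (bigD1 i) //= big1 ?addr0 ?H ?eqxx ?scale1r // => j ne.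
by rewrite H eq_sym (negPf ne) scale0r.
Qed.

Lemma Refl_invol : Refl *m Refl = 1%:M.
Proof.
rewrite /Refl mulmxBl !mulmxBr !mulmx1 mul1mx -scalemxAl -scalemxAr Pi_idem scalerA.
have ->: (2%:R * 2%:R : C) = 2%:R + 2%:R by rewrite -natrM -natrD.
by rewrite scalerDl addrK opprB addrC subrK.
Qed.

Lemma Refl_perp (v : 'cV[C]_(m * n)) : in_HE_perp E v -> Refl *m v = - v.
Proof.
move=> hv; rewrite /Refl mulmxBl mul1mx -scalemxAl mulmx_suml big1 ?scaler0 ?sub0r //.
by move=> i _; rewrite -mulmxA hv ?mulmx0.
Qed.

Lemma Refl_HE (v : 'cV[C]_(m * n)) : in_HE E v -> in_HE E (Refl *m v).
Proof.
move=> hv; rewrite /Refl mulmxBl mul1mx -scalemxAl mulmx_suml.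
apply: in_HED; last exact: in_HEN.
apply: in_HEZ; apply: in_HE_sum => i.
by rewrite -mulmxA [adj _ *m _]mx11_scalar mul_mx_scalar; apply: in_HEZ.
Qed.
End Refl.
End Aux.
Arguments Refl {R m n k} f.
Arguments Refl_invol {R m n k f}.
Arguments Refl_HE {R m n k E f} fE {v}.
Arguments Refl_perp {R m n k E f} fE {v}.


Section Vecs.
Variables (R : realType) (m n : nat) (E : 'I_m -> 'I_n -> bool).
Local Notation C := (R[i]).

Lemma in_HE_ket x y : E x y -> in_HE E (ket R x y).
Proof.
move=> e; rewrite /in_HE /HE_mx.
apply: (sumsmx_sup x) => //; apply: (sumsmx_sup y) => //.
by rewrite genmxE.
Qed.

Lemma phi_HE (P : 'M[R]_(m, n)) th x :
  (forall x y, ~~ E x y -> P x y = 0) -> in_HE E (phi_vec P th x).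
Proof.
move=> PE; apply: in_HE_sum => y.
case e: (E x y); first by apply: in_HEZ; apply: in_HE_ket.
by rewrite PE ?e // sqrtr0 mul0r scale0r; apply: in_HE0.
Qed.

Lemma psi_HE (Q : 'M[R]_(n, m)) th y :
  (forall x y, ~~ E x y -> Q y x = 0) -> in_HE E (psi_vec Q th y).
Proof.
move=> QE; apply: in_HE_sum => x.
case e: (E x y); first by apply: in_HEZ; apply: in_HE_ket.
by rewrite QE ?e // sqrtr0 mul0r scale0r; apply: in_HE0.
Qed.

Lemma phi_ortho (P : 'M[R]_(m, n)) th : right_stochastic P ->
  forall x x', adj (phi_vec P th x) *m phi_vec P th x' = ((x == x' : bool) : nat)%:R%:M.
Proof.
move=> [P0 Ps] x x'.
have := @adj_sum_ket R m n n (fun y => ((Num.sqrt (P x y))%:C * expi (th x y))%C)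
   (fun y => ((Num.sqrt (P x' y))%:C * expi (th x' y))%C) (fun y => (x, y)) (fun y => (x', y)).
rewrite /ket' /= => ->; congr (_ %:M).
case: (eqVneq x x') => [<-|ne].
  under eq_bigr => y _.
    rewrite (bigD1 y) //= xpair_eqE !eqxx /= mulr1 big1 ?addr0; last first.
      by move=> y' ne; rewrite xpair_eqE eqxx /= eq_sym (negPf ne) mulr0.
    rewrite sc //.
  over.
  by rewrite -rmorph_sum Ps.
rewrite big1 // => y _; rewrite big1 // => y' _.
by rewrite xpair_eqE (negPf ne) /= mulr0.
Qed.

Lemma psi_ortho (Q : 'M[R]_(n, m)) th : right_stochastic Q ->
  forall y y', adj (psi_vec Q th y) *m psi_vec Q th y' = ((y == y' : bool) : nat)%:R%:M.
Proof.
move=> [Q0 Qs] y y'.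
have := @adj_sum_ket R m n m (fun x => ((Num.sqrt (Q y x))%:C * expi (th x y))%C)
   (fun x => ((Num.sqrt (Q y' x))%:C * expi (th x y'))%C) (fun x => (x, y)) (fun x => (x, y')).
rewrite /ket' /= => ->; congr (_ %:M).
case: (eqVneq y y') => [<-|ne].
  under eq_bigr => x _.
    rewrite (bigD1 x) //= xpair_eqE !eqxx /= mulr1 big1 ?addr0; last first.
      by move=> x' ne; rewrite xpair_eqE eqxx andbT eq_sym (negPf ne) mulr0.
    rewrite sc //.
  over.
  by rewrite -rmorph_sum Qs.
rewrite big1 // => x _; rewrite big1 // => x' _.
by rewrite xpair_eqE (negPf ne) andbF mulr0.
Qed.
End Vecs.

Theorem lemma1 (R : realType) (m n : nat) (E : 'I_m -> 'I_n -> bool)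
  (P : 'M[R]_(m, n)) (Q : 'M[R]_(n, m)) (th th' : 'I_m -> 'I_n -> R) :
  bip_connected E ->
  right_stochastic P -> (forall x y, ~~ E x y -> P x y = 0) ->
  right_stochastic Q -> (forall x y, ~~ E x y -> Q y x = 0) ->
  let W := Wop P Q th th' in
  (forall v, in_HE E v -> in_HE E (W *m v)) /\
  (forall v, in_HE E v -> exists2 u, in_HE E u & W *m u = v) /\
  (forall v, in_HE_perp E v -> W *m v = v).
Proof.
move=> _ hP PE hQ QE W.
have fo := @phi_ortho R m n P th hP; have fE := fun x => @phi_HE R m n E P th x PE.
have go := @psi_ortho R m n Q th' hQ; have gE := fun y => @psi_HE R m n E Q th' y QE.
have R0E : R0op P th = Refl (phi_vec P th) by [].
have R1E : R1op Q th' = Refl (psi_vec Q th') by [].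
have WE : W = Refl (psi_vec Q th') *m Refl (phi_vec P th) by rewrite /W /Wop R0E R1E.
have Winv : forall v, in_HE E v -> in_HE E (W *m v).
  by move=> v hv; rewrite WE -mulmxA; apply: (Refl_HE gE); apply: (Refl_HE fE).
split=> //; split.
  move=> v hv; exists (Refl (phi_vec P th) *m (Refl (psi_vec Q th') *m v)).
    by apply: (Refl_HE fE); apply: (Refl_HE gE).
  rewrite WE !mulmxA -(mulmxA (Refl (psi_vec Q th'))) (Refl_invol fo) mulmx1.
  by rewrite (Refl_invol go) mul1mx.
move=> v hv; rewrite WE -mulmxA (Refl_perp fE hv) mulmxN.
by rewrite (Refl_perp gE) ?opprK.
Qed.
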